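(* If a graph $G$ has a $\gamma$-set $D$ such that $\gamma(G-x)>\gamma(G)$ for every $x\in D$, then $\gamma(G)=\gamma_{\rm cer}(G)$.
   Context: All graphs are finite and simple; $G-x$ denotes the graph obtained by deleting vertex $x$. A set $D\subseteq V_G$ is a dominating set of $G$ if every vertex of $V_G-D$ has a neighbor in $D$; $\gamma(G)$ is the minimum cardinality of a dominating set, and a $\gamma$-set is a dominating set of cardinality $\gamma(G)$. A set $D\subseteq V_G$ is a certified dominating set of $G$ if $D$ is a dominating set of $G$ and every vertex of $D$ has either zero or at least two neighbors in $V_G-D$; $\gamma_{\rm cer}(G)$ is the minimum cardinality of a certified dominating set of $G$. *)

(* Defs.v *)
(* A finite simple graph is a symmetric irreflexive relation
   [e] on a finType [T]. Domination is defined relative to a vertex set [V],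
   so that G - x is the subgraph induced by V :\ x. *)
From mathcomp Require Import all_boot.
Set Implicit Arguments. Unset Strict Implicit. Unset Printing Implicit Defensive.

Definition simple_graph (T : finType) (e : rel T) : Prop :=
  symmetric e /\ irreflexive e.

Definition nbhd (T : finType) (e : rel T) (V : {set T}) (v : T) : {set T} :=
  [set u in V | e v u].

Definition dominating (T : finType) (e : rel T) (V D : {set T}) : bool :=
  (D \subset V) && [forall v in V :\: D, [exists u in D, e v u]].

Definition certified_dominating (T : finType) (e : rel T) (V D : {set T}) : bool :=
  dominating e V D &&
  [forall v in D, (#|nbhd e (V :\: D) v| == 0) || (2 <= #|nbhd e (V :\: D) v|)].

Lemma dominating_self (T : finType) (e : rel T) (V : {set T}) : dominating e V V.
Proof.
  rewrite /dominating subxx /=; apply/forall_inP => v; by rewrite setDv inE.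
Qed.

Lemma certified_dominating_self (T : finType) (e : rel T) (V : {set T}) :
  certified_dominating e V V.
Proof.
  rewrite /certified_dominating dominating_self /=.
  apply/forall_inP => v _; apply/orP; left.
  rewrite cards_eq0; apply/eqP; apply/setP => u.
  by rewrite !inE andNb.
Qed.

Definition gamma (T : finType) (e : rel T) (V : {set T}) : nat :=
  #|[arg min_(D < V | dominating e V D) #|D|]|.

Definition gamma_cer (T : finType) (e : rel T) (V : {set T}) : nat :=
  #|[arg min_(D < V | certified_dominating e V D) #|D|]|.

(* Main.v *)
Require Import Defs.
From mathcomp Require Import all_boot.
Set Implicit Arguments. Unset Strict Implicit. Unset Printing Implicit Defensive.

Lemma gamma_le (T : finType) (e : rel T) V D :
  dominating e V D -> gamma e V <= #|D|.
Proof.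
move=> HD; rewrite /gamma.
case: arg_minnP => [|A _ HA]; first exact: dominating_self.
exact: HA.
Qed.

Lemma gamma_ex (T : finType) (e : rel T) V :
  exists D, dominating e V D /\ #|D| = gamma e V.
Proof.
rewrite /gamma; case: arg_minnP => [|A HA _]; first exact: dominating_self.
by exists A.
Qed.

Lemma gamma_cer_le (T : finType) (e : rel T) V D :
  certified_dominating e V D -> gamma_cer e V <= #|D|.
Proof.
move=> HD; rewrite /gamma_cer.
case: arg_minnP => [|A _ HA]; first exact: certified_dominating_self.
exact: HA.
Qed.

Lemma gamma_cer_ex (T : finType) (e : rel T) V :
  exists D, certified_dominating e V D /\ #|D| = gamma_cer e V.
Proof.
rewrite /gamma_cer; case: arg_minnP => [|A HA _]; first exact: certified_dominating_self.
by exists A.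
Qed.

Theorem corollary2p5 (T : finType) (e : rel T) :
  simple_graph e ->
  (exists D : {set T},
      dominating e [set: T] D /\ #|D| = gamma e [set: T] /\
      (forall x, x \in D -> gamma e [set: T] < gamma e ([set: T] :\ x))) ->
  gamma e [set: T] = gamma_cer e [set: T].
Proof.
move=> [esy eirr] [D [HD [HcD Hx]]].
apply/eqP; rewrite eqn_leq; apply/andP; split.
  have [C [HC <-]] := gamma_cer_ex e [set: T].
  apply: gamma_le; by case/andP: HC.
rewrite -HcD; apply: gamma_cer_le.
rewrite /certified_dominating HD /=.
apply/forall_inP => v vD.
set N := nbhd _ _ _.
case: (ltngtP #|N| 1) => [|H|H]; first by rewrite ltnS leqn0 => ->.
  by apply/orP; right.
exfalso.
have [u Nu] : exists u, N = [set u] by apply/cards1P; rewrite H.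
have uN : u \in N by rewrite Nu set11.
move: (uN); rewrite /N /nbhd !inE /= => /andP [/andP [uD _] evu].
have uv : u != v by apply/eqP => uv; subst u; rewrite vD in uD.
have := Hx v vD.
have -> : gamma e [set: T] = #|D| by [].
apply/negP; rewrite -leqNgt.
apply: (@leq_trans #|u |: (D :\ v)|).
  apply: gamma_le.
  rewrite /dominating; apply/andP; split.
    apply/subsetP => w; rewrite !inE; case/orP => [/eqP ->|/andP [wv _]]; by rewrite ?uv ?wv.
  apply/forall_inP => w; rewrite !inE negb_or => /andP [/andP [wu /nandP Hw] /andP [wv _]].
  case: Hw => [/negPn wv'|wD]; first by rewrite wv' in wv.
  move: HD => /andP [_ /forall_inP /(_ w)].
  rewrite !inE wD => /(_ isT) /exists_inP [d dD ewd].
  case: (eqVneq d v) => [dv|dv].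
    subst d; exfalso.
    have : w \in N by rewrite /N /nbhd !inE wD /= esy.
    by rewrite Nu inE (negbTE wu).
  apply/exists_inP; exists d => //.
  by rewrite !inE dv dD orbT.
rewrite cardsU1 (cardsD1 v D) vD.
by rewrite !inE negb_and negbK uD orbT.
Qed.
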